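(* Let $F=\mathbb{F}_{2^8}$, $V=F^{16}$, let $\mathsf M$ be the AES mixing layer and $t$ its order in $\mathrm{GL}(V)$, and let $\alpha:V\to(\mathbb{F}_2)^{4096t}$, $\alpha(v)=(\varepsilon(v),\varepsilon(\mathsf Mv),\dots,\varepsilon(\mathsf M^{t-1}v))$. Let $\mathcal G$ be the subgroup of $\mathrm{Sym}(V)$ generated by $\tilde{\mathcal G}$, $\bar{\mathcal G}$ and $\mathsf M$. Then $\alpha$ is a space embedding with respect to $\mathcal G$: for every $\sigma\in\mathcal G$ there exists $A_\sigma\in\mathrm{GL}((\mathbb{F}_2)^{4096t})$ with $\alpha\circ\sigma=A_\sigma\circ\alpha$.
   Context: $F=\mathbb{F}_2[x]/(x^8+x^4+x^3+x+1)$; write $\bar x$ for the class of $x$. $V=F^{16}$ is viewed as an $\mathbb{F}_2$-space of dimension 128, with elements $(s_0,\dots,s_{15})$. ShiftRows is $(s_0,\dots,s_{15})\mapsto(s_0,s_5,s_{10},s_{15},s_4,s_9,s_{14},s_3,s_8,s_{13},s_2,s_7,s_{12},s_1,s_6,s_{11})$. MixColumns replaces each column $(s_{4c},s_{4c+1},s_{4c+2},s_{4c+3})^T$, $c=0,1,2,3$, by $C(s_{4c},\dots,s_{4c+3})^T$ with $C=\begin{pmatrix}\bar x&\bar x+1&1&1\\1&\bar x&\bar x+1&1\\1&1&\bar x&\bar x+1\\\bar x+1&1&1&\bar x\end{pmatrix}$. The AES mixing layer is $\mathsf M=\text{MixColumns}\circ\text{ShiftRows}$ (ShiftRows applied first).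 Let $\gamma$ be a primitive element of $F$, $e_1,\dots,e_{256}$ the standard basis of $(\mathbb{F}_2)^{256}$, $\varepsilon':F\to(\mathbb{F}_2)^{256}$ given by $\varepsilon'(0)=e_1$, $\varepsilon'(\gamma^i)=e_{i+1}$ ($1\le i\le255$), and $\varepsilon(y_1,\dots,y_{16})=(\varepsilon'(y_1),\dots,\varepsilon'(y_{16}))\in(\mathbb{F}_2)^{4096}$. $\tilde{\mathcal G}$ is the set of maps $(y_1,\dots,y_{16})\mapsto(ay_1+c,\dots,ay_{16}+c)$ with $a\in F\setminus\{0\}$, $c\in F$; $\bar{\mathcal G}$ is the set of translations $v\mapsto v+d$, $d\in V$. *)

(* Defs.v *)
From HB Require Import structures.
From mathcomp Require Import all_boot all_order all_algebra all_fingroup.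
Set Implicit Arguments. Unset Strict Implicit. Unset Printing Implicit Defensive.
Import GRing.Theory.
Local Open Scope ring_scope.

(* F = F_2[x]/(x^8+x^4+x^3+x+1): an element is its reduced representative
   a_0 + a_1 x + ... + a_7 x^7, stored as the coefficient row (a_0..a_7). *)
Definition F := 'rV['F_2]_8.

Definition aes_poly : {poly 'F_2} := 'X^8 + 'X^4 + 'X^3 + 'X + 1.
Definition to_poly (a : F) : {poly 'F_2} := \poly_(i < 8) a ord0 (inord i).
Definition of_poly (p : {poly 'F_2}) : F := \row_(i < 8) (modp p aes_poly)`_i.

Definition mulF (a b : F) : F := of_poly (to_poly a * to_poly b).
Definition oneF : F := of_poly 1.
Definition xbar : F := of_poly 'X.
Definition expF (a : F) (n : nat) : F := iter n (mulF a) oneF.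

Definition primitiveF (g : F) : Prop :=
  expF g 255 = oneF /\ forall k : nat, (0 < k < 255)%N -> expF g k <> oneF.

Definition V := {ffun 'I_16 -> F}.

Definition Cmat (r k : nat) : F :=
  match ((k + 4 - r) %% 4)%N with
  | 0%N => xbar
  | 1%N => of_poly ('X + 1)
  | _ => oneF
  end.

Definition shiftRows (s : V) : V :=
  [ffun i : 'I_16 => s (inord (4 * (((i %/ 4) + (i %% 4)) %% 4) + (i %% 4)))].

Definition mixColumns (s : V) : V :=
  [ffun i : 'I_16 => \sum_(k < 4)
      mulF (Cmat (i %% 4) k) (s (inord (4 * (i %/ 4) + k)))].

Definition Mlayer (s : V) : V := mixColumns (shiftRows s).

Definition is_order_M (t : nat) : Prop :=
  (0 < t)%N /\ (forall v, iter t Mlayer v = v) /\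
  (forall k, (0 < k < t)%N -> exists v, iter k Mlayer v <> v).

(* epsilon' : F -> F_2^256, with 0-based index j: eps'(0) = e_0,
   eps'(gamma^j) = e_j for 1 <= j <= 255 *)
Definition eps_coord (g : F) (y : F) (j : nat) : 'F_2 :=
  (if j == 0%N then y == 0 else y == expF g j)%:R.

(* alpha(v) = (eps(v), eps(Mv), ..., eps(M^{t-1} v)) in F_2^(4096 t);
   coordinate n = 4096 k + 256 i + j refers to eps'((M^k v)_i)_j *)
Definition alpha (t : nat) (g : F) (v : V) : 'rV['F_2]_(4096 * t) :=
  \row_(n < 4096 * t)
    eps_coord g ((iter (n %/ 4096) Mlayer v) (inord ((n %% 4096) %/ 256)))
              ((n %% 4096) %% 256).

Definition transl (d : V) (v : V) : V := [ffun i => v i + d i].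
Definition affF (a c : F) (v : V) : V := [ffun i => mulF a (v i) + c].

(* generators: bar G (translations), tilde G (y_i -> a y_i + c, a <> 0), and M *)
Definition gensG : {set {perm V}} :=
  [set s : {perm V} |
     [|| [exists d : V, [forall v : V, s v == transl d v]],
         [exists a : F, exists c : F, (a != 0) && [forall v : V, s v == affF a c v]]
       | [forall v : V, s v == Mlayer v]]].

Definition calG : {set {perm V}} := <<gensG>>%g.

(* Main.v *)
Require Import Defs.
From HB Require Import structures.
From mathcomp Require Import all_boot all_order all_algebra all_fingroup.
From mathcomp Require Import zify.
Set Implicit Arguments. Unset Strict Implicit. Unset Printing Implicit Defensive.
Import GRing.Theory.
Local Open Scope ring_scope.

Lemma size_aes : size aes_poly = 9%N.
Proof.
rewrite /aes_poly -!addrA size_addl ?size_polyXn //.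
apply: leq_ltn_trans (size_add _ _) _; rewrite gtn_max size_polyXn /=.
apply: leq_ltn_trans (size_add _ _) _; rewrite gtn_max size_polyXn /=.
apply: leq_ltn_trans (size_add _ _) _; rewrite gtn_max size_polyX size_poly1 //.
Qed.

Lemma aes_neq0 : aes_poly != 0.
Proof. by rewrite -size_poly_gt0 size_aes. Qed.

Lemma to_of_poly p : to_poly (of_poly p) = modp p aes_poly.
Proof.
apply/polyP => i; rewrite coef_poly /of_poly.
case: ifP => hi; first by rewrite mxE inordK.
rewrite nth_default //.
have := ltn_modp p aes_poly; rewrite aes_neq0 size_aes => h.
by rewrite -ltnS (leq_trans h) // ltnS leqNgt hi.
Qed.

Lemma of_to_poly a : of_poly (to_poly a) = a.
Proof.
apply/rowP => i; rewrite mxE modp_small; last first.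
  by rewrite size_aes (leq_ltn_trans (size_poly _ _)).
rewrite coef_poly ltn_ord inord_val; congr (a _ _); apply/val_inj => //=.
Qed.

Lemma of_poly_mod p : of_poly (modp p aes_poly) = of_poly p.
Proof. by apply/rowP => i; rewrite !mxE modp_id. Qed.

Lemma to_polyD a b : to_poly (a + b) = to_poly a + to_poly b.
Proof. apply/polyP => i; rewrite coefD !coef_poly; case: (i < 8)%N; by rewrite ?addr0 // mxE. Qed.

Lemma of_polyD p q : of_poly (p + q) = of_poly p + of_poly q.
Proof. by apply/rowP => i; rewrite !mxE modpD coefD. Qed.

Lemma to_poly0 : to_poly 0 = 0.
Proof. by apply/polyP => i; rewrite coef_poly coef0 mxE; case: ifP. Qed.

Lemma mulFC a b : mulF a b = mulF b a.
Proof. by rewrite /mulF mulrC. Qed.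

Lemma mulFA a b c : mulF a (mulF b c) = mulF (mulF a b) c.
Proof.
have Mr p q : of_poly (p * modp q aes_poly) = of_poly (p * q).
  by rewrite -of_poly_mod modp_mul of_poly_mod.
have Ml p q : of_poly (modp p aes_poly * q) = of_poly (p * q).
  by rewrite mulrC Mr mulrC.
by rewrite /mulF !to_of_poly Mr Ml mulrA.
Qed.

Lemma mul1F a : mulF oneF a = a.
Proof.
rewrite /mulF /oneF to_of_poly modp_small ?mul1r ?of_to_poly //.
by rewrite size_aes size_poly1.
Qed.

Lemma mulFDr a b c : mulF a (b + c) = mulF a b + mulF a c.
Proof. by rewrite /mulF to_polyD mulrDr of_polyD. Qed.

Lemma mulF0 a : mulF a 0 = 0.
Proof.
rewrite /mulF to_poly0 mulr0; apply/rowP => i; rewrite !mxE mod0p coef0 //.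
Qed.

Lemma mul0F a : mulF 0 a = 0.
Proof. by rewrite mulFC mulF0. Qed.

Lemma oneF_neq0 : oneF != 0.
Proof.
apply/eqP => h; have := congr1 to_poly h.
rewrite to_poly0 /oneF to_of_poly modp_small ?size_aes ?size_poly1 //.
by move/eqP; rewrite oner_eq0.
Qed.

Lemma expFD g m n : expF g (m + n) = mulF (expF g m) (expF g n).
Proof.
elim: m => [|m IH]; first by rewrite add0n /= mul1F.
by rewrite addSn /expF /= -/(expF g (m + n)) IH mulFA.
Qed.

Definition pt (g : F) (j : 'I_256) : F := if val j == 0%N then 0 else expF g j.

Lemma eps_pt g y (j : 'I_256) : eps_coord g y j = (y == pt g j)%:R.
Proof. by rewrite /eps_coord /pt; case: (val j == 0%N). Qed.

Section Prim.
Variable g : F.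
Hypothesis prim : primitiveF g.

Lemma expF255 : expF g 255 = oneF.
Proof. by case: prim. Qed.

Lemma expF_neq0 j : (j <= 255)%N -> expF g j != 0.
Proof.
move=> hj; apply/eqP => h; have := expFD g (255 - j) j.
rewrite subnK // h mulF0 expF255 => /eqP; by rewrite (negbTE oneF_neq0).
Qed.

Lemma expF_inj_lt i j : (0 < i)%N -> (i < j)%N -> (j <= 255)%N -> expF g i <> expF g j.
Proof.
move=> hi hij hj he; case: prim => _ /(_ (255 - j + i)%N) H; apply: H.
  by apply/andP; split; lia.
by rewrite expFD he -expFD subnK // expF255.
Qed.

Lemma pt_inj : injective (pt g).
Proof.
move=> [i hi] [j hj]; rewrite /pt /=.
case: eqP => i0; case: eqP => j0.
- by move=> _; apply/val_inj; rewrite /= i0 j0.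
- by move/esym/eqP; rewrite (negbTE (expF_neq0 _)) //; lia.
- by move/eqP; rewrite (negbTE (expF_neq0 _)) //; lia.
move=> he; apply/val_inj => /=; case: (ltngtP i j) => // h.
  by exfalso; apply: (expF_inj_lt _ h _ he); lia.
by exfalso; apply: (expF_inj_lt _ h _ (esym he)); lia.
Qed.

Lemma cardF : #|{: F}| = 256%N.
Proof. by rewrite card_mx card_Fp. Qed.

Lemma onto_card (f : 'I_256 -> F) : injective f -> forall y, exists j, f j = y.
Proof.
move=> finj y; have := inj_card_onto finj; rewrite cardF card_ord => /(_ (leqnn _) y).
by case/codomP => j ->; exists j.
Qed.

Lemma mulF_inj a : a != 0 -> injective (mulF a).
Proof.
move=> a0; have [j hj] := onto_card pt_inj a.
have j0 : val j != 0%N by apply: contra a0; rewrite -hj /pt => ->.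
have ea : a = expF g j by rewrite -hj /pt (negbTE j0).
have hb : mulF (expF g (255 - j)) a = oneF.
  by rewrite ea -expFD subnK ?expF255 // -ltnS.
move=> y z e; rewrite -(mul1F y) -(mul1F z) -hb -!mulFA e //.
Qed.
End Prim.

Definition addV (u w : V) : V := [ffun i => u i + w i].
Definition scV (a : F) (v : V) : V := [ffun i => mulF a (v i)].

Lemma mulF_sum a (f : 'I_4 -> F) : mulF a (\sum_(k < 4) f k) = \sum_(k < 4) mulF a (f k).
Proof. exact: (big_morph (mulF a) (mulFDr a) (mulF0 a)). Qed.

Lemma MlayerD u w : Mlayer (addV u w) = addV (Mlayer u) (Mlayer w).
Proof.
apply/ffunP => i; rewrite /Mlayer /mixColumns /shiftRows !ffunE -big_split /=.
by apply: eq_bigr => k _; rewrite !ffunE mulFDr.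
Qed.

Lemma MlayerZ a v : Mlayer (scV a v) = scV a (Mlayer v).
Proof.
apply/ffunP => i; rewrite /Mlayer /mixColumns /shiftRows !ffunE mulF_sum /=.
by apply: eq_bigr => k _; rewrite !ffunE !mulFA (mulFC a).
Qed.

Lemma iterMD k u w : iter k Mlayer (addV u w) = addV (iter k Mlayer u) (iter k Mlayer w).
Proof. by elim: k => //= k ->; rewrite MlayerD. Qed.

Lemma iterMZ k a v : iter k Mlayer (scV a v) = scV a (iter k Mlayer v).
Proof. by elim: k => //= k ->; rewrite MlayerZ. Qed.

Lemma iterM_transl k d v (i : 'I_16) :
  iter k Mlayer (transl d v) i = mulF oneF (iter k Mlayer v i) + iter k Mlayer d i.
Proof. by rewrite mul1F (iterMD k v d) ffunE. Qed.

Lemma iterM_aff k a c v (i : 'I_16) :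
  iter k Mlayer (affF a c v) i = mulF a (iter k Mlayer v i) + iter k Mlayer [ffun => c] i.
Proof.
have -> : affF a c v = addV (scV a v) [ffun => c] by apply/ffunP => j; rewrite !ffunE.
by rewrite iterMD iterMZ !ffunE.
Qed.

Lemma perm_row N (f : 'I_N -> 'I_N) : injective f ->
  exists A : 'M['F_2]_N, A \in unitmx /\ forall u : 'rV_N, u *m A = \row_n u 0 (f n).
Proof.
move=> finj; exists (perm_mx (perm finj)^-1); split; first exact: unitmx_perm.
by move=> u; rewrite -col_permE; apply/rowP => n; rewrite !mxE permE.
Qed.

Local Open Scope nat_scope.
Lemma eps_nat g y (j : nat) : (j < 256)%N -> eps_coord g y j = (y == pt g (inord j))%:R.
Proof. by move=> hj; rewrite -eps_pt inordK. Qed.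

Lemma coord_embed t g (s : V -> V) (pi : nat -> 'I_16 -> F -> F) :
  primitiveF g -> (forall k i, injective (pi k i)) ->
  (forall v k i, iter k Mlayer (s v) i = pi k i (iter k Mlayer v i)) ->
  exists A : 'M['F_2]_(4096 * t),
    A \in unitmx /\ forall v, alpha t g (s v) = alpha t g v *m A.
Proof.
move=> prim piinj Hs.
pose h k i (j : 'I_256) : 'I_256 := odflt ord0 [pick j' | pi k i (pt g j') == pt g j].
have hP k i j : pi k i (pt g (h k i j)) = pt g j.
  have [j' hj'] := onto_card (inj_comp (piinj k i) (pt_inj prim)) (pt g j).
  rewrite /h; case: pickP => [x /eqP //|]; by move/(_ j'); rewrite /= -hj' eqxx.
have hinj k i : injective (h k i).
  by move=> j1 j2 e; apply: (pt_inj prim); rewrite -(hP k i j1) -(hP k i j2) e.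
pose hh (n : nat) := h (n %/ 4096) (inord ((n %% 4096) %/ 256)) (inord ((n %% 4096) %% 256)).
pose fn (n : nat) : nat := (256 * (n %/ 256) + hh n)%N.
have key n : [/\ fn n %/ 4096 = n %/ 4096, (fn n %% 4096) %/ 256 = (n %% 4096) %/ 256
              & (fn n %% 4096) %% 256 = hh n]%N.
  by rewrite /fn; case: (hh n) => j hj /=; split; lia.
have fn_lt (n : 'I_(4096 * t)) : (fn n < 4096 * t)%N.
  by have := ltn_ord n; rewrite /fn; case: (hh n) => j hj /=; lia.
pose f n := Ordinal (fn_lt n).
have finj : injective f.
  move=> n1 n2 /(congr1 val) /= e.
  have [a1 b1 c1] := key n1; have [a2 b2 c2] := key n2.
  rewrite e in a1 b1 c1.
  have ek : (n1 %/ 4096 = n2 %/ 4096)%N by rewrite -a1 a2.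
  have ei : ((n1 %% 4096) %/ 256 = (n2 %% 4096) %/ 256)%N by rewrite -b1 b2.
  have ej : hh n1 = hh n2 by apply/val_inj; rewrite /= -c1 c2.
  move: ej; rewrite /hh ek ei => /hinj /(congr1 (@nat_of_ord 256)).
  rewrite !inordK; try (apply: ltn_pmod; done).
  move=> ej; apply/val_inj => /=; lia.
have [A [hA HA]] := perm_row finj.
exists A; split => // v; rewrite HA; apply/rowP => n; rewrite !mxE /=.
have [a b c] := key n; rewrite a b c Hs.
rewrite !eps_nat ?ltn_pmod // inord_val; congr (_ %:R).
by rewrite -(hP (n %/ 4096)%N (inord ((n %% 4096) %/ 256))) (inj_eq (piinj _ _)).
Qed.


Lemma A1 n t : n %/ 4096 < t.-1 -> n + 4096 < 4096 * t. Proof. lia. Qed.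
Lemma A2 n : (n + 4096) %/ 4096 = (n %/ 4096).+1. Proof. lia. Qed.
Lemma A3 n : (n + 4096) %% 4096 = n %% 4096. Proof. lia. Qed.
Lemma A4 n t : n < 4096 * t -> ~~ (n %/ 4096 < t.-1) -> n + 4096 = n %% 4096 + 4096 * t.
Proof. lia. Qed.
Lemma A5 n t : n < 4096 * t -> ~~ (n %/ 4096 < t.-1) -> (n %/ 4096).+1 = t.
Proof. lia. Qed.
Lemma A6 n : (n %% 4096) %/ 4096 = 0. Proof. lia. Qed.
Lemma A7 n t : n < 4096 * t -> n %% 4096 < 4096 * t. Proof. lia. Qed.

Lemma M_embed t g : is_order_M t ->
  exists A : 'M['F_2]_(4096 * t),
    A \in unitmx /\ forall v, alpha t g (Mlayer v) = alpha t g v *m A.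
Proof.
case=> t0 [tid _].
have N0 : 0 < 4096 * t by rewrite muln_gt0.
pose f (n : 'I_(4096 * t)) := Ordinal (ltn_pmod (n + 4096) N0).
have finj : injective f.
  move=> n1 n2 /(congr1 val) /= /eqP; rewrite eqn_modDr !modn_small // => /eqP e.
  exact: val_inj.
have [A [hA HA]] := perm_row finj.
exists A; split => // v; rewrite HA; apply/rowP => n; rewrite !mxE /=.
have hn := ltn_ord n.
rewrite -iterSr.
have [hk|hk] := boolP (n %/ 4096 < t.-1).
  by rewrite (modn_small (A1 hk)) (A2 n) (A3 n).
rewrite (A4 hn hk) (modnDr (n %% 4096) (4096 * t)) (modn_small (A7 hn)).
by rewrite (A5 hn hk) tid (A6 n) (modn_mod n 4096).
Qed.

Definition Hset t g : {set {perm V}} :=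
  [set s : {perm V} | [exists A : 'M['F_2]_(4096 * t),
     (A \in unitmx) && [forall v : V, alpha t g (s v) == alpha t g v *m A]]].

Lemma HsetP t g (s : {perm V}) : reflect (exists A : 'M['F_2]_(4096 * t),
    A \in unitmx /\ forall v, alpha t g (s v) = alpha t g v *m A) (s \in Hset t g).
Proof.
rewrite inE; apply: (iffP existsP) => [[A /andP[hA /forallP h]]|[A [hA h]]].
  by exists A; split => // v; exact/eqP.
by exists A; rewrite hA; apply/forallP => v; rewrite h.
Qed.

Lemma Hgroup t g : group_set (Hset t g).
Proof.
apply/group_setP; split.
  by apply/HsetP; exists (1%:M)%R; split; [exact: unitmx1 | move=> v; rewrite perm1 mulmx1].
move=> x y /HsetP [A [hA HA]] /HsetP [B [hB HB]]; apply/HsetP.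
exists (A *m B)%R; split; first by rewrite unitmx_mul hA hB.
by move=> v; rewrite permM HB HA mulmxA.
Qed.

Local Close Scope nat_scope.

Theorem mainTheorem10 (t : nat) (g : F) :
  is_order_M t -> primitiveF g ->
  forall sigma : {perm V}, sigma \in calG ->
  exists A : 'M['F_2]_(4096 * t),
    A \in unitmx /\ forall v : V, alpha t g (sigma v) = alpha t g v *m A.
Proof.
move=> ordM prim sigma hs.
have sub : calG \subset Hset t g.
  have := gen_subG gensG (group (Hgroup t g)); rewrite /calG => ->.
  apply/subsetP => s; rewrite inE => /or3P [].
  - case/existsP => d /forallP hd; apply/HsetP.
    apply: (@coord_embed t g s (fun k i y => mulF oneF y + iter k Mlayer d i)) => //.
      by move=> k i y z /addIr /(mulF_inj prim oneF_neq0).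
    by move=> v k i; rewrite (eqP (hd v)) iterM_transl.
  - case/existsP => a /existsP [c /andP [a0 /forallP hac]]; apply/HsetP.
    apply: (@coord_embed t g s (fun k i y => mulF a y + iter k Mlayer [ffun => c] i)) => //.
      by move=> k i y z /addIr /(mulF_inj prim a0).
    by move=> v k i; rewrite (eqP (hac v)) iterM_aff.
  - move/forallP => hM; apply/HsetP.
    have [A [hA HA]] := M_embed g ordM.
    by exists A; split => // v; rewrite (eqP (hM v)).
exact/HsetP/(subsetP sub).
Qed.
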